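(* Let $(V,L,\varphi,E)$ be a valuation system and let $$\Pi L:=\{\textstyle\bigwedge_n a_n \;:\; a_1\ge a_2\ge\cdots \text{ is a } \varphi\text{-convergent sequence in } L\}.$$ Then $\Pi L$ is a sublattice of $V$, and $L$ is a sublattice of $\Pi L$.
   Context: A valuation system $(V,L,\varphi,E)$ consists of: (i) a lattice $V$ which is $\sigma$-distributive, i.e. for every $a\in V$ and every sequence $(b_n)$ in $V$ whose infimum exists, $\bigwedge_n(a\vee b_n)$ exists and equals $a\vee\bigwedge_n b_n$, and dually whenever $\bigvee_n b_n$ exists, $\bigvee_n(a\wedge b_n)$ exists and equals $a\wedge\bigvee_n b_n$; (ii) a sublattice $L$ of $V$; (iii) a partially ordered abelian group $E$ which is R-complete: whenever $x_1\ge x_2\ge\cdots$ and $y_1\ge y_2\ge\cdots$ are sequences in $E$ for which $\bigwedge_n(x_n+y_n)$ exists, then $\bigwedge_n x_n$ and $\bigwedge_n y_n$ exist, and dually for increasing sequences and suprema; (iv) a valuation $\varphi:L\to E$, i.e. an order-preserving map with $\varphi(a\wedge b)+\varphi(a\vee b)=\varphi(a)+\varphi(b)$ for all $a,b\in L$. A decreasing sequence $a_1\ge a_2\ge\cdots$ in $L$ is $\varphi$-convergent if $\bigwedge_n a_n$ exists in $V$ and $\bigwedge_n\varphi(a_n)$ exists in $E$. *)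

(* Defs.v *)
From HB Require Import structures.
From mathcomp Require Import all_boot all_order all_algebra.
Set Implicit Arguments. Unset Strict Implicit. Unset Printing Implicit Defensive.
Import Order.TTheory GRing.Theory.
Local Open Scope order_scope.

Definition is_inf {d} {T : porderType d} (s : nat -> T) (x : T) : Prop :=
  (forall n, x <= s n) /\ (forall y, (forall n, y <= s n) -> y <= x).
Definition is_sup {d} {T : porderType d} (s : nat -> T) (x : T) : Prop :=
  (forall n, s n <= x) /\ (forall y, (forall n, s n <= y) -> x <= y).

Definition decreasing {d} {T : porderType d} (s : nat -> T) : Prop :=
  forall n, s n.+1 <= s n.
Definition increasing {d} {T : porderType d} (s : nat -> T) : Prop :=
  forall n, s n <= s n.+1.

Definition sigma_distributive {d} (V : latticeType d) : Prop :=
  (forall (a : V) (b : nat -> V) x, is_inf b x -> is_inf (fun n => a `|` b n) (a `|` x)) /\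
  (forall (a : V) (b : nat -> V) x, is_sup b x -> is_sup (fun n => a `&` b n) (a `&` x)).

Definition sublattice {d} (V : latticeType d) (L : V -> Prop) : Prop :=
  forall a b, L a -> L b -> L (a `&` b) /\ L (a `|` b).

Definition po_group (E : porderZmodType) : Prop :=
  forall x y z : E, x <= y -> (x + z)%R <= (y + z)%R.

Definition R_complete (E : porderZmodType) : Prop :=
  (forall x y : nat -> E, decreasing x -> decreasing y ->
     (exists z, is_inf (fun n => (x n + y n)%R) z) ->
     (exists u, is_inf x u) /\ (exists v, is_inf y v)) /\
  (forall x y : nat -> E, increasing x -> increasing y ->
     (exists z, is_sup (fun n => (x n + y n)%R) z) ->
     (exists u, is_sup x u) /\ (exists v, is_sup y v)).

(* valuation phi : L -> E (phi given on all of V, only its values on L matter) *)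
Definition valuation {d} (V : latticeType d) (L : V -> Prop) (E : porderZmodType)
  (phi : V -> E) : Prop :=
  (forall a b, L a -> L b -> a <= b -> phi a <= phi b) /\
  (forall a b, L a -> L b -> (phi (a `&` b) + phi (a `|` b))%R = (phi a + phi b)%R).

Definition valuation_system {d} (V : latticeType d) (L : V -> Prop) (E : porderZmodType)
  (phi : V -> E) : Prop :=
  sigma_distributive V /\ sublattice L /\ po_group E /\ R_complete E /\ valuation L phi.

Definition phi_convergent {d} (V : latticeType d) (L : V -> Prop) (E : porderZmodType)
  (phi : V -> E) (a : nat -> V) : Prop :=
  (forall n, L (a n)) /\ decreasing a /\
  (exists x, is_inf a x) /\ (exists e, is_inf (fun n => phi (a n)) e).

Definition PiL {d} (V : latticeType d) (L : V -> Prop) (E : porderZmodType)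
  (phi : V -> E) : V -> Prop :=
  fun x => exists a : nat -> V, phi_convergent L phi a /\ is_inf a x.

(* Main.v *)
Require Import Defs.
From mathcomp Require Import all_boot all_order all_algebra.
Import Order.TTheory GRing.Theory.
Local Open Scope order_scope.
Set Implicit Arguments. Unset Strict Implicit.

Lemma decr_le d (T : porderType d) (s : nat -> T) :
  decreasing s -> forall n m, (n <= m)%N -> s m <= s n.
Proof.
move=> hs n m /subnK <-; elim: (m - n)%N => [|k IH]; first by rewrite add0n.
rewrite addSn; exact: le_trans (hs _) IH.
Qed.

Lemma is_inf_ext d (T : porderType d) (s t : nat -> T) x :
  (forall n, s n = t n) -> is_inf s x -> is_inf t x.
Proof.
move=> e [h1 h2]; split; first by move=> n; rewrite -e.
by move=> y hy; apply: h2 => n; rewrite e.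
Qed.

Lemma inf_add (E : porderZmodType) (x y : nat -> E) u v :
  po_group E -> decreasing x -> decreasing y -> is_inf x u -> is_inf y v ->
  is_inf (fun n => x n + y n)%R (u + v)%R.
Proof.
move=> hpo hx hy [ux hu] [vy hv]; split.
  move=> n; apply: le_trans (hpo _ _ _ (ux n)) _.
  rewrite addrC (addrC (x n)); exact: hpo.
move=> w hw.
have key : forall m n, w <= (x m + y n)%R.
  move=> m n; apply: (le_trans (hw (maxn m n))); rewrite /=.
  apply: le_trans (hpo _ _ _ (decr_le hx (leq_maxl m n))) _.
  rewrite addrC (addrC (x m)); apply: hpo. apply: (decr_le hy). exact: leq_maxr.
have h1 : forall n, (w - y n)%R <= u.
  move=> n; apply: hu => m; have := hpo _ _ (- y n)%R (key m n).
  by rewrite addrK.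
have h2 : (w - u)%R <= v.
  apply: hv => n; have := hpo _ _ (y n - u)%R (h1 n).
  by rewrite addrA addrNK [(u + _)%R]addrC addrNK.
have := hpo _ _ u h2; by rewrite addrNK addrC.
Qed.

Theorem lemma5p2 (d : Order.disp_t) (V : latticeType d) (L : V -> Prop) (E : porderZmodType)
  (phi : V -> E) :
  valuation_system L phi ->
  sublattice (PiL L phi) /\ (forall a, L a -> PiL L phi a).
Proof.
move=> [sd [sl [hpo [[rc _] [mono val]]]]].
split; last first.
  move=> a La; exists (fun _ => a).
  have hinf : is_inf (fun _ : nat => a) a by split=> // y; apply; exact 0%N.
  split=> //; split; first by [].
  split; first by move=> n.
  split; first by exists a.
  exists (phi a); split=> // y; apply; exact 0%N.
move=> x y [a [[La [da [_ [ea hea]]]] hx]] [b [[Lb [db [_ [eb heb]]]] hy]].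
have dI : decreasing (fun n => a n `&` b n) by move=> n; apply: leI2.
have dU : decreasing (fun n => a n `|` b n) by move=> n; apply: leU2.
have LI n : L (a n `&` b n) := (sl _ _ (La n) (Lb n)).1.
have LU n : L (a n `|` b n) := (sl _ _ (La n) (Lb n)).2.
have dphiI : decreasing (fun n => phi (a n `&` b n)) by move=> n; apply: mono.
have dphiU : decreasing (fun n => phi (a n `|` b n)) by move=> n; apply: mono.
have dphia : decreasing (fun n => phi (a n)) by move=> n; apply: mono.
have dphib : decreasing (fun n => phi (b n)) by move=> n; apply: mono.
have hsum : exists z, is_inf (fun n => phi (a n `&` b n) + phi (a n `|` b n))%R z.
  exists (ea + eb)%R; apply: is_inf_ext (inf_add hpo dphia dphib hea heb).
  by move=> n; rewrite val.
have [[eI heI] [eU heU]] := rc _ _ dphiI dphiU hsum.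
have infI : is_inf (fun n => a n `&` b n) (x `&` y).
  split; first by move=> n; apply: leI2; [exact: hx.1 | exact: hy.1].
  move=> z hz; rewrite lexI; apply/andP; split.
    by apply: hx.2 => n; exact: le_trans (hz n) (leIl _ _).
  by apply: hy.2 => n; exact: le_trans (hz n) (leIr _ _).
have infU : is_inf (fun n => a n `|` b n) (x `|` y).
  split; first by move=> n; apply: leU2; [exact: hx.1 | exact: hy.1].
  move=> z hz.
  have k : forall m n, z <= a m `|` b n.
    move=> m n; apply: le_trans (hz (maxn m n)) _.
    exact: leU2 (decr_le da (leq_maxl m n)) (decr_le db (leq_maxr m n)).
  have k2 : forall m, z <= a m `|` y.
    by move=> m; apply: ((sd.1 (a m) b y hy).2 z (k m)).
  rewrite joinC; apply: (sd.1 y a x hx).2 => m; rewrite joinC; exact: k2.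
split.
  exists (fun n => a n `&` b n); split=> //; split=> //; split=> //.
  by split; [exists (x `&` y) | exists eI].
exists (fun n => a n `|` b n); split=> //; split=> //; split=> //.
by split; [exists (x `|` y) | exists eU].
Qed.
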